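(* Let $\Gamma_2$ be the mapping class group of a closed orientable surface of genus $2$, and let $U(2)\subset Sp(4,\mathbb R)$ be a maximal compact subgroup. Then the natural map $$Hom(\Gamma_2,U(2))\to Hom(\Gamma_2,Sp(4,\mathbb R))$$ induced by the inclusion is not surjective on path-components.
   Context: For a finitely generated group $\pi$ and a Lie group $G$, $Hom(\pi,G)$ is the space of homomorphisms $\pi\to G$, topologized as a subspace of $G^k$ via evaluation on a finite generating set; a map of spaces is surjective on path-components if every path-component of the target contains a point of the image. *)

(* Defs.v *)
From HB Require Import structures.
From mathcomp Require Import all_boot all_order all_algebra.
From mathcomp Require Import all_classical all_reals all_analysis.
Import numFieldNormedType.Exports.
Set Implicit Arguments. Unset Strict Implicit. Unset Printing Implicit Defensive.
Import Order.TTheory GRing.Theory Num.Theory.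
Local Open Scope ring_scope.
Local Open Scope classical_set_scope.

Section Defs.
Variable R : realType.

Definition Jmx : 'M[R]_4 := block_mx (0 : 'M[R]_(2,2)) 1%:M (- 1%:M) 0.

Definition Sp4 (A : 'M[R]_4) : Prop := A^T *m Jmx *m A = Jmx.

(* U(2) = Sp(4,R) ∩ O(4), the standard maximal compact subgroup of Sp(4,R)
   (image of A + iB |-> [[A,-B],[B,A]]). *)
Definition U2 (A : 'M[R]_4) : Prop := Sp4 A /\ A^T *m A = 1%:M.

Definition gen (r : 'I_5 -> 'M[R]_4) (k : nat) : 'M[R]_4 := r (inord k).

(* Hom(Gamma_2, G) where Gamma_2 is given by its (Birman--Hilden / Wajnryb)
   presentation with Dehn-twist generators a_1..a_5 (indexed 0..4 here):
   - a_i a_j = a_j a_i           for |i - j| >= 2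
   - a_i a_{i+1} a_i = a_{i+1} a_i a_{i+1}
   - (a_1 a_2 a_3 a_4 a_5)^6 = 1
   - I^2 = 1  where I = a_1 a_2 a_3 a_4 a_5 a_5 a_4 a_3 a_2 a_1
   - I commutes with every a_i  (I is the central hyperelliptic involution).
   A homomorphism is identified with the 5-tuple of images of the generators. *)
Definition is_hom_Gamma2 (G : 'M[R]_4 -> Prop) (r : 'I_5 -> 'M[R]_4) : Prop :=
  [/\ (forall i, G (r i)),
      (forall i j : 'I_5, (i.+1 < j)%N -> r i * r j = r j * r i),
      (forall i j : 'I_5, nat_of_ord j = (nat_of_ord i).+1 ->
          r i * r j * r i = r j * r i * r j),
      (gen r 0 * gen r 1 * gen r 2 * gen r 3 * gen r 4) ^+ 6 = 1 &
      let I := gen r 0 * gen r 1 * gen r 2 * gen r 3 * gen r 4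
               * gen r 4 * gen r 3 * gen r 2 * gen r 1 * gen r 0 in
      I ^+ 2 = 1 /\ (forall i, I * r i = r i * I)].

Definition same_path_component (S : ('I_5 -> 'M[R]_4) -> Prop)
    (x y : 'I_5 -> 'M[R]_4) : Prop :=
  exists g : R -> 'I_5 -> 'M[R]_4,
    [/\ g 0 = x, g 1 = y,
        (forall t : R, 0 <= t <= 1 -> S (g t)) &
        (forall (k : 'I_5) (i j : 'I_4),
            {within [set t : R | 0 <= t <= 1], continuous (fun t => g t k i j)})].

End Defs.

(* Main.v *)
Require Import Defs.
From HB Require Import structures.
From mathcomp Require Import all_boot all_order all_algebra.
From mathcomp Require Import all_classical all_reals all_analysis.
From mathcomp Require Import complex.
From mathcomp Require Import ring.
Import numFieldNormedType.Exports.
Import Order.TTheory GRing.Theory Num.Theory.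
Local Open Scope ring_scope.

Definition lm := seq (seq int).
Definition lget (a : lm) (i j : nat) : int := nth 0 (nth [::] a i) j.
Definition lmul (a b : lm) : lm :=
  [seq [seq lget a i 0 * lget b 0 j + lget a i 1 * lget b 1 j
          + lget a i 2 * lget b 2 j + lget a i 3 * lget b 3 j | j <- iota 0 4]
     | i <- iota 0 4].
Definition ltr (a : lm) : lm := [seq [seq lget a j i | j <- iota 0 4] | i <- iota 0 4].

Definition ladd (a b : lm) : lm :=
  [seq [seq lget a i j + lget b i j | j <- iota 0 4] | i <- iota 0 4].
Definition l0 : lm := [:: [:: 0; 0; 0; 0]; [:: 0; 0; 0; 0]; [:: 0; 0; 0; 0]; [:: 0; 0; 0; 0]].

Section Conc.
Variable R : realType.
Definition mx_of (a : lm) : 'M[R]_4 := \matrix_(i, j) (lget a i j)%:~R.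

Lemma lget_mul a b (i j : 'I_4) : lget (lmul a b) i j =
  lget a i 0 * lget b 0 j + lget a i 1 * lget b 1 j
          + lget a i 2 * lget b 2 j + lget a i 3 * lget b 3 j.
Proof.
rewrite /lget /lmul (nth_map 0%N) ?size_iota ?ltn_ord //.
rewrite (nth_map 0%N) ?size_iota ?ltn_ord // !nth_iota ?ltn_ord //.
Qed.

Lemma mx_of_mul a b : mx_of a * mx_of b = mx_of (lmul a b).
Proof.
rewrite -mulmxE; apply/matrixP => i j; rewrite !mxE lget_mul.
rewrite !big_ord_recr big_ord0 /= !mxE add0r.
by rewrite !rmorphD !rmorphM.
Qed.

Lemma mx_of_tr a : (mx_of a)^T = mx_of (ltr a).
Proof.
apply/matrixP => i j; rewrite !mxE /ltr /lget.
rewrite (nth_map 0%N) ?size_iota ?ltn_ord //.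
rewrite (nth_map 0%N) ?size_iota ?ltn_ord // !nth_iota ?ltn_ord //.
Qed.

Lemma mx_of_add a b : mx_of a + mx_of b = mx_of (ladd a b).
Proof.
apply/matrixP => i j; rewrite !mxE /ladd /lget.
rewrite (nth_map 0%N) ?size_iota ?ltn_ord //.
rewrite (nth_map 0%N) ?size_iota ?ltn_ord // !nth_iota ?ltn_ord //.
by rewrite rmorphD.
Qed.

Lemma mx_of_0 : mx_of l0 = 0.
Proof.
apply/matrixP => i j; rewrite !mxE.
by case: i j => [[|[|[|[|?]]]] Hi] [[|[|[|[|?]]]] Hj].
Qed.

Definition l1 : lm := [:: [:: 1; 0; 0; 0]; [:: 0; 1; 0; 0]; [:: 0; 0; 1; 0]; [:: 0; 0; 0; 1]].
Definition lJ : lm := [:: [:: 0; 0; 1; 0]; [:: 0; 0; 0; 1]; [:: -1; 0; 0; 0]; [:: 0; -1; 0; 0]].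

Lemma mx_of_1 : mx_of l1 = 1.
Proof.
apply/matrixP => i j; rewrite !mxE.
by case: i j => [[|[|[|[|?]]]] Hi] [[|[|[|[|?]]]] Hj].
Qed.

Lemma mx_of_J : mx_of lJ = Jmx R.
Proof.
apply/matrixP => i j; rewrite /Jmx.
case: i j => [[|[|[|[|?]]]] Hi] [[|[|[|[|?]]]] Hj] //;
  rewrite !mxE /=.
all: case: splitP => -[[|[|?]] ?] //= _; rewrite ?mxE;
  case: splitP => -[[|[|?]] ?] //= _; rewrite ?mxE /= ?oppr0 //.
Qed.

Definition La : seq lm :=
 [:: [:: [:: 1; 0; -1; 0]; [:: 0; 1; 0; 0]; [:: 0; 0; 1; 0]; [:: 0; 0; 0; 1]];
     [:: [:: 1; 0; 0; 0]; [:: 0; 1; 0; 0]; [:: 1; 0; 1; 0]; [:: 0; 0; 0; 1]];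
     [:: [:: 1; 0; -1; 1]; [:: 0; 1; 1; -1]; [:: 0; 0; 1; 0]; [:: 0; 0; 0; 1]];
     [:: [:: 1; 0; 0; 0]; [:: 0; 1; 0; 0]; [:: 0; 0; 1; 0]; [:: 0; 1; 0; 1]];
     [:: [:: 1; 0; 0; 0]; [:: 0; 1; 0; -1]; [:: 0; 0; 1; 0]; [:: 0; 0; 0; 1]]].

Definition rho0 (i : 'I_5) : 'M[R]_4 := mx_of (nth [::] La i).

Lemma rho0_hom : is_hom_Gamma2 (@Sp4 R) rho0.
Proof.
split.
- move=> i; rewrite /Sp4 /rho0 mx_of_tr -mx_of_J !mulmxE !mx_of_mul.
  by case: i => [[|[|[|[|[|?]]]]] ?] //=; congr mx_of; vm_compute.
- move=> [[|[|[|[|[|?]]]]] ?] [[|[|[|[|[|?]]]]] ?] //= _; rewrite /rho0 !mx_of_mul /=;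
  by congr mx_of; vm_compute.
- move=> [[|[|[|[|[|?]]]]] ?] [[|[|[|[|[|?]]]]] ?] //= _; rewrite /rho0 !mx_of_mul /=;
  by congr mx_of; vm_compute.
- rewrite /gen /rho0 !inordK // !exprS expr0 mulr1 !mx_of_mul -mx_of_1.
  by congr mx_of; vm_compute.
- rewrite /gen /rho0 !inordK //; split.
  + rewrite !exprS expr0 mulr1 !mx_of_mul -mx_of_1.
    by congr mx_of; vm_compute.
  + move=> [[|[|[|[|[|?]]]]] ?] //=; rewrite !mx_of_mul;
    by congr mx_of; vm_compute.
Qed.
End Conc.

Section Tr.
Variable F : fieldType.
Lemma tr_idem n (P : 'M[F]_n) : P *m P = P -> \tr P = (\rank P)%:R.
Proof.
move=> PP.
have := mulmx_base P; have := row_base_free P; have := col_base_full P.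
move: (col_base P) (row_base P) => L U fL fU eP.
have UL : U *m L = 1%:M.
  apply: (row_free_inj fU); rewrite mul1mx.
  apply: (row_full_inj fL).
  by rewrite mulmxA mulmxA eP -mulmxA eP PP.
by rewrite -{1}eP mxtrace_mulC UL mxtrace1.
Qed.
End Tr.

Lemma sum3 (V : zmodType) (a b c : V) :
  a + b + c + (b + c + a) + (c + a + b) = (a + b + c) *+ 3.
Proof.
have e1 : b + c + a = a + b + c by rewrite addrC addrA.
have e2 : c + a + b = a + b + c by rewrite (addrC c a) addrAC.
by rewrite e1 e2 !mulrS mulr0n addr0 addrA.
Qed.

Section Cont.
Variable R : realType.
Local Open Scope classical_set_scope.
Definition S01 := [set t : R | 0 <= t <= 1].
Definition ct (h : R -> R) := {within S01, continuous h}.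

Lemma ctD h1 h2 : ct h1 -> ct h2 -> ct (fun t => h1 t + h2 t).
Proof. by move=> c1 c2 x; apply: (continuousD (c1 x) (c2 x)). Qed.
Lemma ctM h1 h2 : ct h1 -> ct h2 -> ct (fun t => h1 t * h2 t).
Proof. by move=> c1 c2 x; apply: (continuousM (c1 x) (c2 x)). Qed.
Lemma ctC c : ct (fun=> c).
Proof. by move=> x; apply: cst_continuous. Qed.

Lemma ct_sum n (h : 'I_n -> R -> R) : (forall k, ct (h k)) ->
  ct (fun t => \sum_(k < n) h k t).
Proof.
elim: n h => [|n IH] h hc.
  by rewrite (_ : (fun t => _) = fun=> 0); [apply: ctC | apply/funext=> t; rewrite big_ord0].
rewrite (_ : (fun t => _) = fun t => \sum_(k < n) h (widen_ord (leqnSn n) k) t + h ord_max t).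
  by apply: ctD; [apply: IH => k; apply: hc | apply: hc].
by apply/funext=> t; rewrite big_ord_recr.
Qed.

Definition mct (A : R -> 'M[R]_4) := forall i j, ct (fun t => A t i j).

Lemma mct_mul A B : mct A -> mct B -> mct (fun t => A t * B t).
Proof.
move=> cA cB i j.
rewrite (_ : (fun t => _) = fun t => \sum_k A t i k * B t k j).
  by apply: ct_sum => k; apply: ctM.
by apply/funext => t; rewrite -mulmxE mxE.
Qed.
Lemma mct_add A B : mct A -> mct B -> mct (fun t => A t + B t).
Proof.
move=> cA cB i j.
rewrite (_ : (fun t => _) = fun t => A t i j + B t i j); first by apply: ctD.
by apply/funext => t; rewrite mxE.
Qed.
Lemma mct_C (M : 'M[R]_4) : mct (fun=> M).
Proof. by move=> i j; apply: ctC. Qed.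
Lemma mct_exp A n : mct A -> mct (fun t => A t ^+ n).
Proof.
move=> cA; elim: n => [|n IH]; first by apply: mct_C.
rewrite (_ : (fun t => _) = fun t => A t * A t ^+ n); first by apply: mct_mul.
by apply/funext=> t; rewrite exprS.
Qed.
Lemma ct_tr A : mct A -> ct (fun t => \tr (A t)).
Proof. by move=> cA; apply: ct_sum => k; apply: cA. Qed.

Definition cw (r : 'I_5 -> 'M[R]_4) := gen r 0 * gen r 1 * gen r 2 * gen r 3 * gen r 4.
Definition fQ (r : 'I_5 -> 'M[R]_4) := \tr (1 + cw r ^+ 2 + cw r ^+ 4).

Lemma fQ_int r : is_hom_Gamma2 (@Sp4 R) r -> exists n : nat, fQ r = (3 * n)%:R.
Proof.
case=> _ _ _ c6 _.
set Y := cw r ^+ 2.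
have Y3 : Y ^+ 3 = 1 by rewrite /Y -exprM.
set Q := 1 + Y + cw r ^+ 4.
have eQ : Q = 1 + Y + Y ^+ 2 by rewrite /Q /Y -exprM.
have QQ : Q * Q = 3%:R *: Q.
  rewrite eQ.
  have Y3' : Y * (Y * Y) = 1 by rewrite -Y3 !exprS expr0 mulr1.
  have Y4 : Y * Y * (Y * Y) = Y by rewrite -mulrA Y3' mulr1.
  have Y3'' : Y * Y * Y = 1 by rewrite -mulrA Y3'.
  rewrite expr2 !mulrDl !mulrDr !mul1r !mulr1 Y4 Y3'' Y3' scaler_nat.
  exact: sum3.
set P := 3%:R^-1 *: Q.
have PP : P *m P = P.
  rewrite /P mulmxE -scalerAl -scalerAr QQ !scalerA.
  by congr (_ *: _); rewrite divfK // pnatr_eq0.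
exists (\rank P); rewrite /fQ -/Q natrM.
have -> : Q = 3%:R *: P by rewrite /P scalerA divff ?scale1r // pnatr_eq0.
by rewrite mxtraceZ tr_idem.
Qed.

Lemma path_contra (g : R -> 'I_5 -> 'M[R]_4) :
  (forall t, 0 <= t <= 1 -> is_hom_Gamma2 (@Sp4 R) (g t)) ->
  (forall (k : 'I_5) (i j : 'I_4),
      {within [set t : R | 0 <= t <= 1], continuous (fun t => g t k i j)}) ->
  fQ (g 0) = 12%:R -> fQ (g 1) = 0 -> False.
Proof.
move=> hom cont f0 f1.
have mg k : mct (fun t => gen (g t) k) by move=> i j; apply: cont.
have mc : mct (fun t => cw (g t)) by rewrite /cw; do 4 apply: mct_mul => //.
have cf : ct (fun t => fQ (g t)).
  apply: (@ct_tr (fun t => 1 + cw (g t) ^+ 2 + cw (g t) ^+ 4)).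
  apply: (@mct_add (fun t => 1 + cw (g t) ^+ 2)); last exact: mct_exp.
  apply: (@mct_add (fun=> 1)); [exact: mct_C | exact: mct_exp].
have hc : {within `[0, 1], continuous (fun t => fQ (g t))}.
  by rewrite set_itvcc; apply: cf.
have hv : Num.min (fQ (g 0)) (fQ (g 1)) <= 1 <= Num.max (fQ (g 0)) (fQ (g 1)).
  by rewrite f0 f1 ge_min le_max ler01 orbT ler1n.
have [c c01 fc] := IVT ler01 hc hv.
have c01' : 0 <= c <= 1 by rewrite in_itv /= in c01.
have [n fn] := fQ_int _ (hom c c01').
move: fc; rewrite fn => /eqP; rewrite -[1]/(1%:R) eqr_nat.
by case: n {fn} => [|n]; rewrite ?muln0 // mulnS.
Qed.
End Cont.

Section F2.
Variable F : fieldType.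
Local Notation o0 := (@ord0 1).
Local Notation o1 := (@ord_max 1).

Lemma sum2 (f : 'I_2 -> F) : \sum_i f i = f o0 + f o1.
Proof.
rewrite big_ord_recl big_ord1; congr (_ + f _); exact: val_inj.
Qed.

Lemma ord2P (P : 'I_2 -> Prop) : P o0 -> P o1 -> forall i, P i.
Proof.
move=> h0 h1 [[|[|?]] Hi] //.
- by rewrite (_ : Ordinal Hi = o0) //; apply: val_inj.
- by rewrite (_ : Ordinal Hi = o1) //; apply: val_inj.
Qed.

Lemma mx2P (A B : 'M[F]_2) : A o0 o0 = B o0 o0 -> A o0 o1 = B o0 o1 ->
  A o1 o0 = B o1 o0 -> A o1 o1 = B o1 o1 -> A = B.
Proof.
move=> h1 h2 h3 h4; apply/matrixP; apply: ord2P; apply: ord2P => //.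
Qed.

Lemma comm_span (A Z : 'M[F]_2) : A *m Z = Z *m A ->
  (exists x, Z = x%:M) \/ exists al be, A = al *: Z + be%:M.
Proof.
move/matrixP => h.
have h00 := h o0 o0; have h01 := h o0 o1; have h10 := h o1 o0; have h11 := h o1 o1.
move: h00 h01 h10 h11; rewrite !mxE !sum2.
set p := A o0 o0; set q := A o0 o1; set r := A o1 o0; set s := A o1 o1.
set a := Z o0 o0; set b := Z o0 o1; set c := Z o1 o0; set d := Z o1 o1.
move=> e00 e01 e10 e11.
have mE al be i j : (al *: Z + be%:M) i j = al * Z i j + be *+ (i == j).
  by rewrite !mxE.
have sol (x y e : F) : e != 0 -> e * x = y -> x = y / e.
  by move=> en0 <-; field.
have brE : b * r = q * c.
  by apply: (@addrI _ (p * a)); rewrite [p * a + q * c]e00 (mulrC a p).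
have bsE : b * s = p * b + q * d - a * q by rewrite e01 addrAC subrr add0r.
have cqE : c * q = r * b.
  by apply: (@addrI _ (d * s)); rewrite (addrC (d * s) (c * q)) -e11 (mulrC s d) addrC.
have csE : c * s = c * p + d * r - r * a by rewrite -e10 addrAC subrr add0r mulrC.
have [bn0|b0] := boolP (b != 0).
  right; exists (q / b), (p - q / b * a).
  apply: mx2P; rewrite mE /= ?mulr1n ?mulr0n ?addr0 -/a -/b -/c -/d -/p -/q -/r -/s.
  - by ring.
  - by field.
  - by rewrite (sol _ _ _ bn0 brE); field.
  - by rewrite (sol _ _ _ bn0 bsE); field.
have [cn0|c0] := boolP (c != 0).
  right; exists (r / c), (p - r / c * a).
  apply: mx2P; rewrite mE /= ?mulr1n ?mulr0n ?addr0 -/a -/b -/c -/d -/p -/q -/r -/s.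
  - by ring.
  - by rewrite (sol _ _ _ cn0 cqE); field.
  - by field.
  - by rewrite (sol _ _ _ cn0 csE); field.
move: b0 c0; rewrite !negbK => /eqP b0 /eqP c0.
have [ad|adn] := eqVneq a d.
  left; exists a; apply: mx2P; rewrite !mxE /= ?mulr1n ?mulr0n //.
right; exists ((p - s) / (a - d)), (p - (p - s) / (a - d) * a).
have ad0 : a - d != 0 by rewrite subr_eq0.
have q0 : q = 0.
  apply/eqP; move: e01; rewrite b0 !mulr0 !mul0r add0r addr0 => e.
  have : q * (a - d) = 0 by rewrite mulrBr e mulrC subrr.
  by move/eqP; rewrite mulf_eq0 (negPf ad0) orbF.
have r0 : r = 0.
  apply/eqP; move: e10; rewrite c0 !mulr0 !mul0r add0r addr0 => e.
  have : r * (a - d) = 0 by rewrite mulrBr e mulrC subrr.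
  by move/eqP; rewrite mulf_eq0 (negPf ad0) orbF.
apply: mx2P; rewrite mE /= ?mulr1n ?mulr0n ?addr0 -/a -/b -/c -/d -/p -/q -/r -/s.
- by ring.
- by rewrite q0 b0 mulr0.
- by rewrite r0 c0 mulr0.
- by field.
Qed.

Lemma comm_or_scalar (A B Z : 'M[F]_2) : A *m Z = Z *m A -> B *m Z = Z *m B ->
  (exists x, Z = x%:M) \/ A *m B = B *m A.
Proof.
move=> hA hB; have [|[al [be eA]]] := comm_span _ _ hA; first by left.
right; rewrite eA mulmxDl mulmxDr -scalemxAl -scalemxAr hB.
by rewrite mul_scalar_mx mul_mx_scalar.
Qed.
End F2.

Section U2.
Variable R : realType.
Local Notation C := (R[i]).
Local Open Scope complex_scope.
Lemma cmul (a b c d : R) : (a +i* b : C) * (c +i* d) = (a * c - b * d) +i* (a * d + b * c).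
Proof. by []. Qed.
Lemma cadd (a b c d : R) : (a +i* b : C) + (c +i* d) = (a + c) +i* (b + d).
Proof. by []. Qed.
Lemma copp (a b : R) : - (a +i* b : C) = (- a) +i* (- b).
Proof. by []. Qed.
Lemma c0 : (0 : C) = 0 +i* 0. Proof. by []. Qed.
Lemma c1 : (1 : C) = 1 +i* 0. Proof. by []. Qed.
Definition ul (X : 'M[R]_4) : 'M[R]_2 := @ulsubmx R 2 2 2 2 X.
Definition ur (X : 'M[R]_4) : 'M[R]_2 := @ursubmx R 2 2 2 2 X.
Definition dl (X : 'M[R]_4) : 'M[R]_2 := @dlsubmx R 2 2 2 2 X.
Definition dr (X : 'M[R]_4) : 'M[R]_2 := @drsubmx R 2 2 2 2 X.

Lemma K_block (X : 'M[R]_4) : X *m Jmx R = Jmx R *m X ->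
  X = block_mx (ul X) (ur X) (- ur X) (ul X).
Proof.
have eX : X = block_mx (ul X) (ur X) (dl X) (dr X) by rewrite /ul /ur /dl /dr submxK.
rewrite /Jmx {1 2}eX !(@mulmx_block _ 2 2 2 2 2 2) => e; have [e1 e2 e3 e4] := @eq_block_mx _ 2 2 2 2 _ _ _ _ _ _ _ _ e.
move: e1 e2; rewrite !mulmx0 !mul0mx !mulmx1 !mul1mx !mulmxN !add0r !addr0 ?mulmx1 => e1 e2.
by rewrite {1}eX -e1 e2.
Qed.

Definition K (X : 'M[R]_4) := X *m Jmx R = Jmx R *m X.
Definition phi (X : 'M[R]_4) : 'M[C]_2 := \matrix_(i, j) ((ul X i j) +i* (- ur X i j)).

Lemma ul_mul X Y : K X -> K Y -> ul (X *m Y) = ul X *m ul Y - ur X *m ur Y.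
Proof.
move=> /K_block eX /K_block eY.
rewrite {1}eX {1}eY (@mulmx_block _ 2 2 2 2 2 2) /ul block_mxKul.
by rewrite mulmxN.
Qed.
Lemma ur_mul X Y : K X -> K Y -> ur (X *m Y) = ul X *m ur Y + ur X *m ul Y.
Proof.
move=> /K_block eX /K_block eY.
by rewrite {1}eX {1}eY (@mulmx_block _ 2 2 2 2 2 2) /ur block_mxKur.
Qed.

Lemma phiM X Y : K X -> K Y -> phi (X *m Y) = phi X *m phi Y.
Proof.
move=> kX kY; apply/matrixP => i j.
rewrite /phi ul_mul // ur_mul // !mxE !big_ord_recr !big_ord0 /= !mxE !add0r.
rewrite !cmul !cadd; congr Complex; ring.
Qed.

Lemma K_mul X Y : K X -> K Y -> K (X *m Y).
Proof. by rewrite /K => kX kY; rewrite -mulmxA kY !mulmxA kX. Qed.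

Lemma phi_inj X Y : K X -> K Y -> phi X = phi Y -> X = Y.
Proof.
move=> /K_block eX /K_block eY /matrixP h.
have e1 : ul X = ul Y.
  by apply/matrixP => i j; move: (h i j); rewrite !mxE => -[].
have e2 : ur X = ur Y.
  apply/matrixP => i j; move: (h i j); rewrite !mxE => -[_] /eqP.
  by rewrite eqr_opp => /eqP.
by rewrite eX eY e1 e2.
Qed.

Lemma lift_comm X Y : K X -> K Y -> phi X *m phi Y = phi Y *m phi X ->
  X *m Y = Y *m X.
Proof.
move=> kX kY h; apply: phi_inj; try by apply: K_mul.
by rewrite !phiM.
Qed.

Definition cen (Z : 'M[R]_4) := forall W, K W -> Z *m W = W *m Z.

Lemma key A B Z : K A -> K B -> K Z -> A *m Z = Z *m A -> B *m Z = Z *m B ->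
  cen Z \/ A *m B = B *m A.
Proof.
move=> kA kB kZ hA hB.
have hA' : phi A *m phi Z = phi Z *m phi A by rewrite -!phiM // hA.
have hB' : phi B *m phi Z = phi Z *m phi B by rewrite -!phiM // hB.
case: (comm_or_scalar _ _ _ _ hA' hB') => [[x ex]|h].
  left => W kW; apply: lift_comm => //.
  by rewrite ex scalar_mxC.
by right; apply: lift_comm.
Qed.

Lemma U2_K A : U2 A -> K A.
Proof.
case; rewrite /Sp4 /K => hS hO.
have hO' := mulmx1C hO.
by rewrite -[in LHS]hS !mulmxA hO' mul1mx.
Qed.

Lemma U2_unit (A : 'M[R]_4) : U2 A -> A \is a GRing.unit.
Proof. by case=> _ hO; case: (mulmx1_unit hO). Qed.
End U2.


Arguments cw {R}. Arguments fQ {R}. Arguments K {R}. Arguments cen {R}.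
Arguments phi {R}. Arguments mx_of {R}. Arguments rho0 {R}.

Lemma fQ_rho0 (R : realType) : fQ (@rho0 R) = 0.
Proof.
rewrite /fQ /cw /gen /rho0 !inordK //.
rewrite !exprS expr0 !mulr1 -mx_of_1 !mx_of_mul !mx_of_add.
have -> : forall x, x = l0 -> mx_of x = 0 :> 'M[R]_4 by move=> x ->; exact: mx_of_0.
  by rewrite mxtrace0.
by vm_compute.
Qed.

Section Main.
Variable R : realType.

Lemma eqcb (X Y : 'M[R]_4) : X * Y = Y * X -> X * Y * X = Y * X * Y ->
  X \is a GRing.unit -> Y \is a GRing.unit -> X = Y.
Proof.
move=> hc hb uX uY.
have h : X * (X * Y) = X * (Y * Y).
  by rewrite hc mulrA hb -hc -mulrA.
by move/(mulrI uX): h => /(mulIr uY).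
Qed.

Lemma U2_c2 (r : 'I_5 -> 'M[R]_4) : is_hom_Gamma2 (@U2 R) r -> cw r ^+ 2 = 1.
Proof.
case=> hU hc hb c6 [I2 _].
have kx k : K (gen r k) by apply: U2_K; apply: hU.
have ux k : gen r k \is a GRing.unit by apply: U2_unit; apply: hU.
have cm i j : (i.+1 < j)%N -> (j < 5)%N -> gen r i * gen r j = gen r j * gen r i.
  move=> hij hj; apply: hc; rewrite !inordK //.
  by apply: ltn_trans hj; apply: ltn_trans hij.
have br i : (i.+1 < 5)%N ->
    gen r i * gen r i.+1 * gen r i = gen r i.+1 * gen r i * gen r i.+1.
  by move=> hi; apply: hb; rewrite !inordK // (ltn_trans _ hi).
have keyR i j k : (gen r i * gen r k = gen r k * gen r i) ->
    (gen r j * gen r k = gen r k * gen r j) ->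
    cen (gen r k) \/ gen r i * gen r j = gen r j * gen r i.
  by move=> h1 h2; rewrite -!mulmxE; apply: key; rewrite ?mulmxE.
have step i j : cen (gen r i) ->
    gen r i * gen r j * gen r i = gen r j * gen r i * gen r j ->
    gen r i = gen r j /\ cen (gen r j).
  move=> ci hij.
  have e : gen r i = gen r j.
    by apply: eqcb => //; rewrite -mulmxE ci.
  by split => //; rewrite -e.
have b01 := br 0%N erefl; have b12 := br 1%N erefl.
have b23 := br 2%N erefl; have b34 := br 3%N erefl.
have e : [/\ gen r 0 = gen r 1, gen r 1 = gen r 2, gen r 2 = gen r 3 &
             gen r 3 = gen r 4].
  have [c3|p01] := keyR 0%N 1%N 3%N (cm 0%N 3%N erefl erefl) (cm 1%N 3%N erefl erefl).
    have [e32 c2] := step 3%N 2%N c3 (esym b23).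
    have [e34 _] := step 3%N 4%N c3 b34.
    have [e21 c1] := step 2%N 1%N c2 (esym b12).
    have [e10 _] := step 1%N 0%N c1 (esym b01).
    by split.
  have e01 : gen r 0 = gen r 1 by apply: eqcb.
  have [c4|p12] := keyR 1%N 2%N 4%N (cm 1%N 4%N erefl erefl) (cm 2%N 4%N erefl erefl).
    have [e43 c3] := step 4%N 3%N c4 (esym b34).
    have [e32 c2] := step 3%N 2%N c3 (esym b23).
    have [e21 _] := step 2%N 1%N c2 (esym b12).
    by split.
  have e12 : gen r 1 = gen r 2 by apply: eqcb.
  have [c0|p23] := keyR 2%N 3%N 0%N (esym (cm 0%N 2%N erefl erefl)) (esym (cm 0%N 3%N erefl erefl)).
    have c2 : cen (gen r 2) by rewrite -e12 -e01.
    have [e23 c3] := step 2%N 3%N c2 b23.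
    have [e34 _] := step 3%N 4%N c3 b34.
    by split.
  have e23 : gen r 2 = gen r 3 by apply: eqcb.
  have [c0|p34] := keyR 3%N 4%N 0%N (esym (cm 0%N 3%N erefl erefl)) (esym (cm 0%N 4%N erefl erefl)).
    have c3 : cen (gen r 3) by rewrite -e23 -e12 -e01.
    have [e34 _] := step 3%N 4%N c3 b34.
    by split.
  have e34 : gen r 3 = gen r 4 by apply: eqcb.
  by split.
case: e => e01 e12 e23 e34.
move: c6 I2; rewrite /cw -e34 -e23 -e12 -e01.
set M := gen r 0.
have p5 : M * M * M * M * M = M ^+ 5 by rewrite !exprS expr0 mulr1 !mulrA.
have p10 : M * M * M * M * M * M * M * M * M * M = M ^+ 10
  by rewrite !exprS expr0 mulr1 !mulrA.
rewrite p10 p5 -!exprM /= => h30 h20.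
have : M ^+ 10 * M ^+ 20 = M ^+ 30 by rewrite -exprD.
by rewrite h20 h30 mulr1.
Qed.

Lemma fQ_U2 (r : 'I_5 -> 'M[R]_4) : is_hom_Gamma2 (@U2 R) r -> fQ r = 12%:R.
Proof.
move=> h; rewrite /fQ.
have -> : cw r ^+ 4 = (cw r ^+ 2) ^+ 2 by rewrite -exprM.
rewrite U2_c2 // expr1n.
have t1 : \tr (1 : 'M[R]_4) = 4%:R by exact: mxtrace1.
by rewrite !mxtraceD t1 -!natrD.
Qed.

End Main.

Theorem mainTheorem12 (R : realType) :
  exists rho : 'I_5 -> 'M[R]_4,
    is_hom_Gamma2 (@Sp4 R) rho /\
    forall rho' : 'I_5 -> 'M[R]_4, is_hom_Gamma2 (@U2 R) rho' ->
      ~ same_path_component (is_hom_Gamma2 (@Sp4 R)) rho' rho.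
Proof.
exists rho0; split; first exact: rho0_hom.
move=> rho' hU [g [g0 g1 hom cont]].
apply: (@path_contra R g hom cont).
- by rewrite g0 fQ_U2.
- by rewrite g1 fQ_rho0.
Qed.
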